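(* Let $(E,\rho)$ be a weighted space and let $A\subset C_b(E)$ be a subalgebra (with respect to pointwise multiplication) that contains the constant function $1_E$ and separates the points of $E$. Then $A$ is dense in $\mathscr{B}^\rho(E)$ with respect to $\|\cdot\|_\rho$.
   Context: A weighted space is a pair $(E,\rho)$ where $E$ is a completely regular Hausdorff topological space and $\rho:E\to(0,\infty)$ is an admissible weight function, meaning that for every $R\ge 0$ the sublevel set $K_R:=\{x\in E:\rho(x)\le R\}$ is compact. For $f:E\to\mathbb{R}$ put $\|f\|_\rho:=\sup_{x\in E}|f(x)|/\rho(x)$; $\mathscr{B}^\rho(E)$ denotes the closure of $C_b(E)$ (bounded continuous real functions on $E$) with respect to $\|\cdot\|_\rho$ inside the Banach space $\{f:E\to\mathbb{R}:\|f\|_\rho<\infty\}$. *)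

(* Defs.v *)
From mathcomp Require Import all_boot all_order all_algebra.
From mathcomp Require Import all_classical all_reals all_analysis.
Set Implicit Arguments. Unset Strict Implicit. Unset Printing Implicit Defensive.
Import Order.TTheory GRing.Theory Num.Theory.
Local Open Scope classical_set_scope.
Local Open Scope ring_scope.

Definition admissible_weight {R : realType} {E : topologicalType} (rho : E -> R) :=
  (forall x, 0 < rho x) /\ (forall r : R, 0 <= r -> compact [set x | rho x <= r]).

Definition wnorm {R : realType} {E : Type} (rho : E -> R) (f : E -> R) : \bar R :=
  ereal_sup [set ((`|f x| / rho x)%:E) | x in [set: E]].

Definition Cb {R : realType} {E : topologicalType} : set (E -> R) :=
  [set f | continuous f /\ exists M : R, forall x, `|f x| <= M].

Definition Brho {R : realType} {E : topologicalType} (rho : E -> R) : set (E -> R) :=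
  [set f | (wnorm rho f < +oo)%E /\
     forall eps : R, 0 < eps -> exists2 g, Cb g & (wnorm rho (f \- g)%R < eps%:E)%E].

Definition unital_subalgebra_Cb {R : realType} {E : topologicalType} (A : set (E -> R)) :=
  [/\ A `<=` Cb, A (cst 1),
      (forall f g, A f -> A g -> A (f \+ g)),
      (forall (c : R) f, A f -> A (fun x => c * f x)) &
      (forall f g, A f -> A g -> A (f \* g))].

Definition separates_points {R : realType} {E : Type} (A : set (E -> R)) :=
  forall x y : E, x <> y -> exists2 f, A f & f x <> f y.

(* Main.v *)
Require Import Defs.
From mathcomp Require Import all_boot all_order all_algebra.
From mathcomp Require Import all_classical all_reals all_analysis.
From mathcomp Require Import ring lra.
Import Order.TTheory GRing.Theory Num.Theory.
Local Open Scope classical_set_scope.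
Local Open Scope ring_scope.
Set Implicit Arguments. Unset Strict Implicit.

From HB Require Import structures.
Import numFieldNormedType.Exports.
Section Real.
Variable R : realType.

Fixpoint pit (t : R) (n : nat) : R :=
  if n is n'.+1 then pit t n' + (t - pit t n' ^+ 2) / 2 else 0.

Lemma pit_bound (s : R) n : 0 <= s <= 1 ->
  0 <= pit (s ^+ 2) n <= s /\ s - pit (s ^+ 2) n <= s * (1 - s / 2) ^+ n.
Proof.
move=> /andP[s0 s1]; elim: n => [|n [/andP[p0 ps] IH]] /=.
  by split; [apply/andP; split|rewrite expr0 mulr1 subr0]; lra.
set p := pit _ n in p0 ps IH *.
have q0 : 0 <= 1 - s / 2 by lra.
split; first (apply/andP; split; nra).
have e : s - (p + (s ^+ 2 - p ^+ 2) / 2) = (s - p) * (1 - (s + p) / 2).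
  by rewrite /GRing.exp /=; field.
rewrite e.
have h1 : (s - p) * (1 - (s + p) / 2) <= (s - p) * (1 - s/2) by apply: ler_wpM2l; lra.
apply: (le_trans h1); rewrite exprS [X in _ <= X]mulrCA [X in X <= _]mulrC; exact: ler_wpM2l.
Qed.

Lemma pit_unif (eps : R) : 0 < eps -> exists n, forall s : R, 0 <= s <= 1 ->
  0 <= pit (s ^+ 2) n <= s /\ s - pit (s ^+ 2) n <= eps.
Proof.
move=> e0.
have [e1|e1] := leP 1 eps.
  exists 0%N => s /andP[s0 s1] /=; split; [apply/andP;split=>//|lra].
have hq : `|1 - eps / 2| < 1 by rewrite ger0_norm; lra.
move: (cvg_expr hq) => /cvgr0_norm_lt /(_ _ e0).
move=> [N _ HN]; exists N => s hs; have [B1 B2] := @pit_bound s N hs.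
split => //. move/andP: hs => [s0 s1].
have [se|se] := leP s eps.
  move/andP: B1 => [? ?]; lra.
have h1 := HN N (leqnn N). rewrite /= ger0_norm in h1; last by apply: exprn_ge0; lra.
have h2 : (1 - s/2) ^+ N <= (1 - eps/2) ^+ N.
  apply: lerXn2r; rewrite ?inE ?nnegrE; lra.
have h3 : s * (1 - s / 2) ^+ N <= (1 - s / 2) ^+ N.
  rewrite -[X in _ <= X]mul1r; apply: ler_wpM2r => //; apply: exprn_ge0; lra.
lra.
Qed.

Definition mnr (u v : R) := (u + v - `|u - v|) / 2.
Definition mxr (u v : R) := (u + v + `|u - v|) / 2.

Lemma mnrE1 u v : u <= v -> mnr u v = u.
Proof. move=> h; rewrite /mnr ler0_norm; lra. Qed.
Lemma mnrE2 u v : v <= u -> mnr u v = v.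
Proof. move=> h; rewrite /mnr ger0_norm; lra. Qed.
Lemma mxrE1 u v : u <= v -> mxr u v = v.
Proof. move=> h; rewrite /mxr ler0_norm; lra. Qed.
Lemma mxrE2 u v : v <= u -> mxr u v = u.
Proof. move=> h; rewrite /mxr ger0_norm; lra. Qed.

Lemma mnr_le1 u v : mnr u v <= u.
Proof. by have [h|h] := leP u v; [rewrite mnrE1|rewrite mnrE2 //; lra]. Qed.
Lemma mnr_le2 u v : mnr u v <= v.
Proof. by have [h|h] := leP u v; [rewrite mnrE1|rewrite mnrE2 //; lra]. Qed.
Lemma mnr_or u v : mnr u v = u \/ mnr u v = v.
Proof. by have [h|h] := leP u v; [left; rewrite mnrE1|right; rewrite mnrE2 //; lra]. Qed.

Lemma clamp_prop (u v B : R) : `|v| <= B ->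
  `|mxr (mnr u B) (- B)| <= B /\ `|v - mxr (mnr u B) (- B)| <= `|v - u|.
Proof.
move=> vB; have := vB; rewrite ler_norml => /andP[hv1 hv2].
have [h1|h1] := leP u B.
  rewrite mnrE1 //. have [h2|h2] := leP u (-B).
    rewrite mxrE1 //; split; first by rewrite normrN ger0_norm; lra.
    rewrite (ger0_norm (x := v - - B)); last lra.
    rewrite (ger0_norm (x := v - u)); lra.
  rewrite mxrE2; last lra. split; first by rewrite ler_norml; lra.
  by [].
rewrite mnrE2; last lra. rewrite mxrE2; last lra.
split; first by rewrite ler_norml; lra.
rewrite (ler0_norm (x := v - B)); last lra.
rewrite (ler0_norm (x := v - u)); lra.
Qed.

Lemma seq_lb (s : seq R) : (forall q, q \in s -> 0 < q) ->
  exists2 m, 0 < m & forall q, q \in s -> m <= q.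
Proof.
elim: s => [|a s IH] H; first by exists 1 => //.
have [m m0 hm] := IH (fun q qs => H q ltac:(by rewrite in_cons qs orbT)).
have a0 : 0 < a by apply: H; rewrite mem_head.
exists (Order.min a m); first by rewrite lt_min a0 m0.
move=> q; rewrite in_cons => /orP[/eqP ->|qs]; rewrite ge_min ?lexx //.
by rewrite hm // orbT.
Qed.

End Real.

Section P.
Variables (E : topologicalType) (x0 : E).
Definition pE : Type := E.
HB.instance Definition _ := Topological.on pE.
HB.instance Definition _ := isPointed.Build pE x0.
Lemma cc (K : set E) : compact K -> @cover_compact E K.
Proof. move=> cK; have := @compact_cover pE. move=> h. rewrite /= in h.
have cK' : @compact pE K by exact: cK.
rewrite h in cK'. exact: cK'.
Qed.
End P.

Section SW.
Variables (R : realType) (E : topologicalType) (A : set (E -> R)).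
Hypothesis HA : unital_subalgebra_Cb A.

Lemma A_Cb {a} : A a -> Cb a. Proof. by case: HA => h _ _ _ _; apply: h. Qed.
Lemma A_add {f g} : A f -> A g -> A (f \+ g). Proof. by case: HA => _ _ h _ _; apply: h. Qed.
Lemma A_scal c {f} : A f -> A (fun x => c * f x). Proof. by case: HA => _ _ _ h _; apply: h. Qed.
Lemma A_mul {f g} : A f -> A g -> A (f \* g). Proof. by case: HA => _ _ _ _ h; apply: h. Qed.
Lemma A_ext {f g} : A f -> (forall x, f x = g x) -> A g.
Proof. by move=> Af fg; have <- : f = g by apply/funext. Qed.
Lemma A_cst (c : R) : A (fun _ => c).
Proof.
case: HA => _ A1 _ _ _. apply: (A_ext (A_scal c A1)) => x /=. by rewrite mulr1.
Qed.

Lemma A_pit a (c : R) : A a -> c != 0 -> forall n, A (fun x => pit ((a x / c) ^+ 2) n).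
Proof.
move=> Aa c0; elim=> [|n IH] /=; first exact: A_cst.
set P := fun x => pit _ n in IH *.
have h1 : A (fun x => (1 / 2 / c ^+ 2) * (a \* a) x) by apply: A_scal; apply: A_mul.
have h2 : A (fun x => (- 1 / 2) * (P \* P) x) by apply: A_scal; apply: A_mul.
apply: (A_ext (A_add (A_add IH h1) h2)) => x /=.
rewrite /P /=; rewrite /GRing.exp /=; field; exact: c0.
Qed.

Lemma abs_A a : A a -> forall eps : R, 0 < eps ->
  exists2 b, A b & forall x, `| `|a x| - b x| <= eps.
Proof.
move=> Aa eps e0; have [_ [M hM]] := A_Cb Aa.
pose c := `|M| + 1.
have c0 : 0 < c by rewrite /c; have := normr_ge0 M; lra.
have ce0 : 0 < eps / c by apply: divr_gt0.
have [n hn] := pit_unif ce0.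
exists (fun x => c * pit ((a x / c) ^+ 2) n).
  by apply: A_scal; apply: A_pit => //; rewrite gt_eqF.
move=> x.
have hs : 0 <= `|a x| / c <= 1.
  apply/andP; split; first by apply: divr_ge0 => //; apply: ltW.
  rewrite ler_pdivrMr // mul1r; have := hM x; have := ler_norm M; rewrite /c; lra.
have e : (a x / c) ^+ 2 = (`|a x| / c) ^+ 2.
  by rewrite !expr_div_n real_normK // num_real.
rewrite e; have [/andP[p0 p1] p2] := hn _ hs.
set p := pit _ n in p0 p1 p2 *.
have -> : `|a x| - c * p = c * (`|a x| / c - p) by field; rewrite gt_eqF.
rewrite normrM (gtr0_norm c0) ger0_norm; last lra.
by rewrite mulrC -ler_pdivlMr //.
Qed.


Definition L (h : E -> R) := continuous h /\
  forall d : R, 0 < d -> exists2 a, A a & forall x, `|h x - a x| <= d.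

Lemma L_ext {f g} : L f -> (forall x, f x = g x) -> L g.
Proof. by move=> Lf fg; have <- : f = g by apply/funext. Qed.

Lemma L_A {a} : A a -> L a.
Proof.
move=> Aa; split; first by case: (A_Cb Aa).
by move=> d d0; exists a => // x; rewrite subrr normr0 ltW.
Qed.

Lemma L_cst (c : R) : L (fun _ => c).
Proof. exact: L_A (A_cst c). Qed.

Lemma L_add {f g} : L f -> L g -> L (f \+ g).
Proof.
move=> [fc fa] [gc ga]; split.
  by move=> x; exact: (continuousD (fc x) (gc x)).
move=> d d0; have d2 : 0 < d / 2 by lra.
have [a Aa ha] := fa _ d2; have [b Ab hb] := ga _ d2.
exists (a \+ b); first exact: A_add.
move=> x /=; have := ha x; have := hb x.
have -> : f x + g x - (a x + b x) = (f x - a x) + (g x - b x) by ring.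
have := ler_normD (f x - a x) (g x - b x); lra.
Qed.

Lemma L_scal c {f} : L f -> L (fun x => c * f x).
Proof.
move=> [fc fa]; split.
  by move=> x; exact: (continuousM (@cst_continuous E R c x) (fc x)).
move=> d d0; have c1 : 0 < `|c| + 1 by have := normr_ge0 c; lra.
have d2 : 0 < d / (`|c| + 1) by apply: divr_gt0.
have [a Aa ha] := fa _ d2; exists (fun x => c * a x); first exact: A_scal.
move=> x; rewrite -mulrBr normrM.
have h1 := ha x; have h2 := normr_ge0 (f x - a x); have h3 := normr_ge0 c.
have h4 : (`|c| + 1) * `|f x - a x| <= d by rewrite mulrC -ler_pdivlMr.
nra.
Qed.

Lemma L_abs {f} : L f -> L (fun x => `|f x|).
Proof.
move=> [fc fa]; split.
  move=> x; apply: (continuous_comp (fc x)); exact: norm_continuous.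
move=> d d0; have d2 : 0 < d / 2 by lra.
have [a Aa ha] := fa _ d2; have [b Ab hb] := abs_A Aa d2.
exists b => // x; have := ha x; have := hb x.
have := ler_dist_dist (f x) (a x).
have := ler_distD (`|a x|) (`|f x|) (b x). lra.
Qed.


Lemma L_mn {f g} : L f -> L g -> L (fun x => mnr (f x) (g x)).
Proof.
move=> Lf Lg; have h1 := L_scal (-1) Lg; have h2 := L_abs (L_add Lf h1).
have h3 := L_add (L_add Lf Lg) (L_scal (-1) h2).
apply: (L_ext (L_scal (1/2) h3)) => x /=; rewrite /mnr !mulN1r; lra.
Qed.

Lemma L_minseq (F : E -> E -> R) (y0 : E) (s : seq E) : (forall y, L (F y)) ->
  exists h, [/\ L h, forall z, h z <= F y0 z, forall z y, y \in s -> h z <= F y z &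
    forall z, h z = F y0 z \/ exists2 y, y \in s & h z = F y z].
Proof.
move=> LF; elim: s => [|y s [h [Lh h1 h2 h3]]].
  by exists (F y0); split => // z; left.
exists (fun z => mnr (F y z) (h z)); split.
- exact: L_mn.
- by move=> z; apply: le_trans (h1 z); apply: mnr_le2.
- move=> z y'; rewrite in_cons => /orP[/eqP ->|ys]; first exact: mnr_le1.
  by apply: le_trans (h2 z y' ys); apply: mnr_le2.
- move=> z; have [->|->] := mnr_or (F y z) (h z).
    by right; exists y => //; rewrite mem_head.
  have [->|[y' ys ->]] := h3 z; first by left.
  by right; exists y' => //; rewrite in_cons ys orbT.
Qed.

Lemma interp (sep : separates_points A) (g : E -> R) x y :
  exists a, A a /\ a x = g x /\ a y = g y.
Proof.
case: (pselect (x = y)) => [<-|nxy]; first by exists (fun _ => g x); split => //; exact: A_cst.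
have [f Af fxy] := sep _ _ nxy.
have nz : f y - f x != 0 by rewrite subr_eq0; apply/eqP => /esym.
pose k := (g y - g x) / (f y - f x).
have Aa := A_add (A_cst (g x)) (A_scal k (A_add Af (A_cst (- f x)))).
exists (fun z => g x + k * (f z + - f x)); split; first exact: (A_ext Aa).
split; first by rewrite subrr mulr0 addr0.
by rewrite /k; field.
Qed.

Lemma stepB (sep : separates_points A) (g : E -> R) (gc : continuous g) (K : set E)
  (cK : compact K) (d : R) (d0 : 0 < d) x (Kx : K x) :
  exists h, [/\ L h, h x = g x & forall z, K z -> h z < g z + d].
Proof.
have /choice [F HF] : forall y, exists a, A a /\ a x = g x /\ a y = g y.
  by move=> y; apply: interp.
have cov := cc x cK.
have opn : forall y, K y -> open ((fun y => [set z | F y z - g z < d]) y).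
  move=> y _.
  have Fc : continuous (F y) by case: (A_Cb (HF y).1).
  have := @open_comp _ _ (fun z => F y z - g z) [set r | r < d].
  apply; last exact: open_lt.
  by move=> z _; exact: (continuousB (Fc z) (gc z)).
have cvr : K `<=` cover K (fun y => [set z | F y z - g z < d]).
  move=> z Kz; exists z => //=; rewrite (HF z).2.2 subrr //.
have [D' sD cD] := cov E K _ opn cvr.
have [h [Lh h1 h2 h3]] := @L_minseq F x (finmap.enum_fset D') (fun y => L_A (HF y).1).
exists h; split => //.
  by have [->|[y _ ->]] := h3 x; apply: (HF _).2.1.
move=> z Kz; have [y yD /= hy] := cD z Kz.
by have := h2 z y yD; lra.
Qed.

Lemma SW (sep : separates_points A) (g : E -> R) (gc : continuous g) (K : set E)
  (cK : compact K) (d : R) (d0 : 0 < d) :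
  exists h, L h /\ forall z, K z -> `|g z - h z| < d.
Proof.
case: (pselect (exists x, K x)) => [[x0 Kx0]|nK]; last first.
  by exists (fun _ => 0); split; [exact: L_cst|move=> z Kz; case: nK; exists z].
have /choice [H HH] : forall x, exists h, L h /\
    (K x -> h x = g x /\ forall z, K z -> h z < g z + d).
  move=> x; case: (pselect (K x)) => Kx.
    by have [h [Lh ? ?]] := stepB sep gc cK d0 Kx; exists h.
  by exists (fun _ => 0); split => //; exact: L_cst.
have cov := cc x0 cK.
have opn : forall y, K y -> open ((fun y => [set z | g z - H y z < d]) y).
  move=> y _.
  have Hc : continuous (H y) by case: (HH y).1.
  have := @open_comp _ _ (fun z => g z - H y z) [set r | r < d].
  apply; last exact: open_lt.
  by move=> z _; exact: (continuousB (gc z) (Hc z)).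
have cvr : K `<=` cover K (fun y => [set z | g z - H y z < d]).
  move=> z Kz; exists z => //=; rewrite ((HH z).2 Kz).1 subrr //.
have [D' sD cD] := cov E K _ opn cvr.
have [m [Lm h1 h2 h3]] := @L_minseq (fun y z => - H y z) x0 (finmap.enum_fset D')
  (fun y => L_ext (L_scal (-1) (HH y).1) (fun z => mulN1r _)).
exists (fun z => - m z); split.
  exact: (L_ext (L_scal (-1) Lm) (fun z => mulN1r _)).
move=> z Kz; rewrite ltr_norml.
have [y yD /= hy] := cD z Kz.
have a1 := h2 z y yD.
have a2 : - m z < g z + d.
  have [->|[y' y'D ->]] := h3 z; rewrite opprK.
    exact: ((HH x0).2 Kx0).2.
  have Ky' : K y' by have := sD _ y'D; rewrite inE.
  exact: ((HH y').2 Ky').2.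
lra.
Qed.

End SW.

Lemma mxr_mnr (R : realType) (u v : R) : mxr u v = - mnr (- u) (- v).
Proof.
rewrite /mxr /mnr; have -> : - u - - v = - (u - v) by ring.
rewrite normrN; lra.
Qed.

Lemma rho_lb (R : realType) (E : topologicalType) (rho : E -> R)
  (hE : hausdorff_space E) (adm : admissible_weight rho) (r : R) (r0 : 0 <= r) :
  exists2 m, 0 < m & forall x, rho x <= r -> m <= rho x.
Proof.
case: adm => rpos rK.
case: (pselect (exists x, rho x <= r)) => [[x0 _]|nK]; last first.
  by exists 1 => // x hx; case: nK; exists x.
have cov := cc x0 (rK r r0).
have opn : forall q, [set q : R | 0 < q] q -> open ((fun q => [set x | q < rho x]) q).
  move=> q q0.
  have := compact_closed hE (rK q (ltW q0)); rewrite -openC => op.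
  have -> : [set x | q < rho x] = ~` [set x | rho x <= q].
    apply/seteqP; split => x /=; first by move=> h1 h2; lra.
    by move=> h; rewrite ltNge; apply/negP.
  exact: op.
have cvr : [set x | rho x <= r] `<=` cover [set q : R | 0 < q] (fun q => [set x | q < rho x]).
  move=> x _; exists (rho x / 2) => /=; have := rpos x; lra.
have [D' sD cD] := cov R _ _ opn cvr.
have [m m0 hm] := @seq_lb R (finmap.enum_fset D') (fun q qD => ltac:(by have := sD q qD; rewrite inE)).
exists m => // x hx; have [q qD /= hq] := cD x hx.
by have := hm q qD; lra.
Qed.

Theorem mainTheorem3 (R : realType) (E : topologicalType) (rho : E -> R)
  (A : set (E -> R)) :
  hausdorff_space E -> completely_regular_space E ->
  admissible_weight rho ->
  unital_subalgebra_Cb A -> separates_points A ->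
  forall f : E -> R, Brho rho f ->
  forall eps : R, 0 < eps -> exists2 a, A a & (wnorm rho (f \- a)%R < eps%:E)%E.
Proof.
move=> hE _ adm HA sep f [_ Bf] eps e0.
have e2 : 0 < eps / 2 by lra.
have [g Cg wg] := Bf _ e2.
have hfg : forall x, `|f x - g x| / rho x < eps / 2.
  move=> x; rewrite -lte_fin; apply: le_lt_trans wg.
  by apply: ereal_sup_ubound; exists x.
case: Cg => gc [M gM].
pose B := `|M|.
have gB : forall x, `|g x| <= B by move=> x; apply: le_trans (gM x) (ler_norm M).
have B0 : 0 <= B by apply: normr_ge0.
pose R0 := 4 * (2 * B + 1) / eps + 1.
have R00 : 0 < R0.
  rewrite /R0; have : 0 <= 4 * (2 * B + 1) / eps.
    by apply: divr_ge0; [lra|exact: ltW].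
  lra.
have [m m0 hm] := rho_lb hE adm (ltW R00).
pose d := Order.min 1 (m * eps / 8).
have d0 : 0 < d by rewrite lt_min ltr01 /=; apply: divr_gt0 => //; apply: mulr_gt0.
have d1 : d <= 1 by rewrite ge_min lexx.
have d2 : d <= m * eps / 8 by rewrite ge_min lexx orbT.
have [h [Lh hK]] := SW HA sep gc (adm.2 R0 (ltW R00)) d0.
pose c := fun z => mxr (mnr (h z) B) (- B).
have Lc : L A c.
  have L1 := L_mn HA Lh (L_cst HA B).
  have L2 := L_scal HA (-1) L1.
  have L3 := L_mn HA L2 (L_cst HA B).
  apply: (L_ext (L_scal HA (-1) L3)) => z /=.
  by rewrite /c mxr_mnr opprK !mulN1r.
have [a Aa ha] := Lc.2 d d0.
have key : forall x, `|g x - a x| <= rho x * (eps / 4).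
  move=> x; have [cB cg] := clamp_prop (h x) (gB x).
  have hax := ha x; rewrite -/(c x) in cB cg.
  have t := ler_distD (c x) (g x) (a x).
  have rx := (adm.1 x).
  case: (leP (rho x) R0) => hr.
    have hgh := hK x hr; have hmx := hm x hr.
    have : m * (eps / 4) <= rho x * (eps / 4) by apply: ler_wpM2r => //; lra.
    lra.
  have t2 := ler_normB (g x) (c x); have := gB x.
  have eR : R0 * (eps / 4) = (2 * B + 1) + eps / 4 by rewrite /R0; field; rewrite gt_eqF.
  have : R0 * (eps / 4) <= rho x * (eps / 4) by apply: ler_wpM2r; lra.
  lra.
exists a => //.
apply: (@le_lt_trans _ _ ((eps / 2 + eps / 4)%:E)); last by rewrite lte_fin; lra.
apply: ge_ereal_sup => _ [x _ <-]; rewrite lee_fin /=.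
have rx := adm.1 x.
have t := ler_distD (g x) (f x) (a x).
have k1 : `|g x - a x| / rho x <= eps / 4 by rewrite ler_pdivrMr // mulrC.
have k2 : `|f x - a x| / rho x <= `|f x - g x| / rho x + `|g x - a x| / rho x.
  by rewrite -mulrDl; apply: ler_wpM2r => //; rewrite invr_ge0 ltW.
have := hfg x; lra.
Qed.
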